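(* Let $X$ be a distance-regular graph of diameter $d\geq 2$ with degree $k$, $\lambda=a_1$ and $\mu=c_2$. Then $k-\mu\leq 2(k-\lambda)$. If moreover $a_2\neq 0$, then also $k-\lambda\leq 2(k-\mu)$.
   Context: A connected graph $X$ of diameter $d$ is distance-regular if there are integers $a_i,b_i,c_i$ ($0\le i\le d$) such that for all vertices $v,w$ with $\mathrm{dist}(v,w)=i$, $w$ has exactly $c_i$ neighbours at distance $i-1$, $a_i$ at distance $i$, $b_i$ at distance $i+1$ from $v$; $X$ is $k$-regular with $k=b_0$. Thus $\lambda=a_1$ is the number of common neighbours of two adjacent vertices and $\mu=c_2$ that of two vertices at distance 2. *)

(* Defs.v *)
From mathcomp Require Import all_boot.
Set Implicit Arguments. Unset Strict Implicit. Unset Printing Implicit Defensive.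

Definition simple_graph (T : finType) (e : rel T) : Prop :=
  (forall x y, e x y = e y x) /\ (forall x, ~~ e x x).

Fixpoint ball (T : finType) (e : rel T) (n : nat) (x : T) : {set T} :=
  match n with
  | 0 => [set x]
  | n'.+1 => ball e n' x :|: [set y | [exists z in ball e n' x, e z y]]
  end.

Definition connected_graph (T : finType) (e : rel T) : Prop :=
  forall x y : T, y \in ball e #|T| x.

(* graph distance: least n with y in ball n x (meaningful when connected,
   since every distance is < #|T|) *)
Definition gdist (T : finType) (e : rel T) (x y : T) : nat :=
  find (fun i => y \in ball e i x) (iota 0 #|T|).

Definition nbr_at (T : finType) (e : rel T) (v w : T) (j : nat) : nat :=
  #|[set u | e w u & gdist e v u == j]|.

Definition diameter (T : finType) (e : rel T) (d : nat) : Prop :=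
  (exists x y, gdist e x y = d) /\ (forall x y, gdist e x y <= d).

Definition distance_regular (T : finType) (e : rel T) (d : nat)
  (a b c : nat -> nat) : Prop :=
  [/\ simple_graph e, connected_graph e, diameter e d &
      forall (v w : T) (i : nat), gdist e v w = i ->
        [/\ 0 < i -> nbr_at e v w i.-1 = c i,
            nbr_at e v w i = a i &
            nbr_at e v w i.+1 = b i]].

(* Main.v *)
Require Import Defs.
From mathcomp Require Import all_boot.
From mathcomp Require Import zify.
Set Implicit Arguments. Unset Strict Implicit. Unset Printing Implicit Defensive.

Section G.
Variables (T : finType) (e : rel T).

Lemma ball_mono m n v : m <= n -> ball e m v \subset ball e n v.
Proof.
elim: n => [|n IH]; first by rewrite leqn0 => /eqP ->.
rewrite leq_eqVlt => /orP [/eqP -> //| H].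
apply: subset_trans (IH H) _; exact: subsetUl.
Qed.

Lemma gd_le_small v w n : n < #|T| -> (gdist e v w <= n) = (w \in ball e n v).
Proof.
move=> Hn; rewrite /gdist.
set p := (fun i => w \in ball e i v).
apply/idP/idP => H.
- have Hs : find p (iota 0 #|T|) < size (iota 0 #|T|) by rewrite size_iota; lia.
  have := nth_find 0 (etrans (has_find _ _) Hs).
  rewrite /p nth_iota; last by rewrite size_iota in Hs.
  rewrite add0n => Hb; exact: (subsetP (ball_mono v H)).
- rewrite leqNgt; apply/negP => Hlt.
  have := before_find 0 Hlt; rewrite /p nth_iota // add0n H //.
Qed.

Hypothesis conn : connected_graph e.

Lemma gd_le v w n : (gdist e v w <= n) = (w \in ball e n v).
Proof.
case: (ltnP n #|T|) => Hn; first exact: gd_le_small.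
have -> : gdist e v w <= n.
  apply: leq_trans Hn; rewrite /gdist.
  by have := find_size (fun i => w \in ball e i v) (iota 0 #|T|); rewrite size_iota.
by symmetry; apply: (subsetP (ball_mono v Hn)); apply: conn.
Qed.

Hypothesis sg : simple_graph e.

Lemma gd0 v : gdist e v v = 0.
Proof. by apply/eqP; rewrite -leqn0 gd_le /= inE. Qed.

Lemma gd1 v u : (gdist e v u == 1) = e v u.
Proof.
case: sg => esy eirr.
have H1 := gd_le v u 1; have H0 := gd_le v u 0.
rewrite /= !inE in H1 H0.
have Hb : [exists z in [set v], e z u] = e v u.
  apply/existsP/idP => [[z] | E]; first by rewrite inE => /andP [/eqP ->].
  by exists v; rewrite inE eqxx.
rewrite Hb in H1.
apply/idP/idP => [/eqP E | E].
- rewrite E /= in H0 H1; move: H1 => /esym/orP [H|H] //; by rewrite -H0 in H.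
- have Hne : (u == v) = false.
    apply/negbTE/eqP => Huv; move: E; rewrite Huv; by move: (eirr v) => /negbTE ->.
  rewrite Hne in H0; rewrite E orbT in H1.
  by rewrite eqn_leq H1 ltnNge H0.
Qed.

Lemma descend v w i : gdist e v w = i.+1 -> exists u, e w u /\ gdist e v u = i.
Proof.
case: sg => esy eirr => E.
have Hw : w \in ball e i.+1 v by rewrite -gd_le E.
have Hnw : w \notin ball e i v by rewrite -gd_le E ltnn.
move: Hw; rewrite /= inE (negbTE Hnw) /= inE => /existsP [z /andP [Hz Ez]].
exists z; split; first by rewrite esy.
apply/eqP; rewrite eqn_leq gd_le Hz /= leqNgt; apply/negP.
clear E; case: i Hnw Hz => [|j] Hnw Hz; first by [].
rewrite ltnS gd_le => Hzj.
move: Hnw; rewrite /= inE negb_or => /andP [_ /negP]; apply; rewrite inE; apply/existsP; exists z.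
by rewrite Hzj Ez.
Qed.

Lemma down n m v w : gdist e v w = n + m -> exists u, gdist e v u = n.
Proof.
elim: m w => [|m IH] w; first by rewrite addn0; exists w.
rewrite addnS => /descend [u [_ Hu]]; exact: IH Hu.
Qed.
End G.

Lemma tri (T : finType) (A B C : {set T}) :
  #|A :\: C| <= #|A :\: B| + #|B :\: C|.
Proof.
apply: leq_trans (leq_card_setU (A :\: B) (B :\: C)).
apply: subset_leq_card; apply/subsetP => x; rewrite !inE.
by case: (x \in A); case: (x \in B); case: (x \in C).
Qed.

Theorem lemma4p1 (T : finType) (e : rel T) (d : nat) (a b c : nat -> nat) :
  distance_regular e d a b c -> 2 <= d ->
  (b 0 - c 2 <= 2 * (b 0 - a 1)) /\
  (a 2 != 0 -> b 0 - a 1 <= 2 * (b 0 - c 2)).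
Proof.
case=> sg conn [[x0 [y0 hd]] _] DR hd2.
have [esy eirr] := sg.
pose N u := [set t | e u t].
have kN : forall u, #|N u| = b 0.
  move=> u; have [_ _ <-] := DR u u 0 (gd0 conn u).
  rewrite /nbr_at; apply: eq_card => t; rewrite !inE.
  by case E: (e u t); rewrite //= (gd1 conn sg).
have lam : forall u w, e u w -> #|N w :&: N u| = a 1.
  move=> u w E; have [_ <- _] := DR u w 1 (eqP (etrans (gd1 conn sg u w) E)).
  rewrite /nbr_at; apply: eq_card => t; rewrite !inE.
  by rewrite (gd1 conn sg).
have mu : forall u w, gdist e u w = 2 -> #|N w :&: N u| = c 2.
  move=> u w E; have [H _ _] := DR u w 2 E; rewrite -H //.
  rewrite /nbr_at; apply: eq_card => t; rewrite !inE.
  by rewrite (gd1 conn sg).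
have [z Hz] : exists z, gdist e x0 z = 2.
  apply: (@down _ _ conn sg 2 (d - 2) x0 y0); rewrite hd; lia.
have [y [Ezy Hy]] := descend conn sg Hz.
have Exy : e x0 y by rewrite -(gd1 conn sg) Hy.
have Ha1 := lam _ _ Exy.
have Ha1' : #|N z :&: N y| = a 1 by apply: lam; rewrite esy.
have Hc := mu _ _ Hz.
have Hk1 := kN x0; have Hk2 := kN y; have Hk3 := kN z.
split.
  have := tri (N z) (N y) (N x0); rewrite !cardsD Ha1 Ha1' Hc Hk2 Hk3; lia.
move=> a2n.
have [_ Ha2 _] := DR x0 z 2 Hz.
have : 0 < nbr_at e x0 z 2 by rewrite Ha2 lt0n.
rewrite /nbr_at card_gt0 => /set0Pn [u]; rewrite inE => /andP [Ezu /eqP Hu].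
have Hb1 : #|N z :&: N u| = a 1 by apply: lam; rewrite esy.
have Hc2 : #|N x0 :&: N u| = c 2 by rewrite setIC; apply: mu.
have Hk4 := kN u.
have := tri (N z) (N x0) (N u); rewrite !cardsD Hb1 Hc2 Hc Hk1 Hk3; lia.
Qed.
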